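(* Let $q$ be a prime power, $u,v\in\mathbb{F}_q^3$ and $\mu\in\mathbb{F}_q$. (1) For every $\lambda\in\mathbb{F}_q^*$, $\widetilde{B}(\lambda u)\cap\widetilde{B}(\mu v)=\lambda\,[\widetilde{B}(u)\cap\widetilde{B}(\lambda^{-1}\mu v)]$. (2) If the family $\{\widetilde{B}(\lambda u):\lambda\in\mathbb{F}_q^*\}$ is a partition of $\widetilde{E}(u)$ and the family $\{\widetilde{B}(\lambda v):\lambda\in\mathbb{F}_q^*\}$ is a partition of $\widetilde{E}(v)$ (i.e. their members are pairwise disjoint with unions $\widetilde{E}(u)$, resp. $\widetilde{E}(v)$), then \[|\widetilde{E}(u)\cap\widetilde{E}(v)|=(q-1)\sum_{\mu\in\mathbb{F}_q^*}|\widetilde{B}(u)\cap\widetilde{B}(\mu v)|.\]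
   Context: $\mathbb{F}_q$ is the finite field with $q$ elements. Hamming distance $d(u,v)=|\{i:u_i\ne v_i\}|$ on $\mathbb{F}_q^3$; $B(u)=\{v:d(u,v)\le1\}$; $E(u)=\bigcup_{\lambda\in\mathbb{F}_q}B(\lambda u)$. $\mathcal{D}_q=\{(u_1,u_2,u_3)\in\mathbb{F}_q^3: u_1,u_2,u_3 \text{ pairwise distinct and nonzero}\}$, $\widetilde{B}(u)=B(u)\cap\mathcal{D}_q$, $\widetilde{E}(u)=E(u)\cap\mathcal{D}_q$. For a set $Z$ and scalar $\lambda$, $\lambda Z=\{\lambda z: z\in Z\}$. *)

(* Defs.v *)
From HB Require Import structures.
From mathcomp Require Import all_boot all_order all_algebra all_field.
Set Implicit Arguments. Unset Strict Implicit. Unset Printing Implicit Defensive.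
Import GRing.Theory.
Local Open Scope ring_scope.

(* Vectors of F_q^3 are row vectors 'rV[F]_3 over a finite field F (q = #|F|). *)
Section Defs.
Variable F : finFieldType.
Notation V := 'rV[F]_3.

Definition hdist (u v : V) : nat := #|[set i : 'I_3 | u 0 i != v 0 i]|.

Definition ball1 (u : V) : {set V} := [set v : V | (hdist u v <= 1)%N].

Definition Eset (u : V) : {set V} := \bigcup_(l : F) ball1 (l *: u).

Definition Dq : {set V} :=
  [set u : V | [&& u 0 0 != 0, u 0 1 != 0, u 0 2 != 0,
                  u 0 0 != u 0 1, u 0 0 != u 0 2 & u 0 1 != u 0 2]].

Definition Bt (u : V) : {set V} := ball1 u :&: Dq.
Definition Et (u : V) : {set V} := Eset u :&: Dq.

Definition sscale (l : F) (Z : {set V}) : {set V} := [set l *: z | z in Z].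

Definition Bt_partition (u : V) : Prop :=
  (forall l1 l2 : F, l1 != 0 -> l2 != 0 -> l1 != l2 ->
     [disjoint Bt (l1 *: u) & Bt (l2 *: u)]) /\
  \bigcup_(l : F | l != 0) Bt (l *: u) = Et u.
End Defs.

(* Main.v *)
Require Import Defs.
From HB Require Import structures.
From mathcomp Require Import all_boot all_order all_algebra all_field.
Import GRing.Theory.
Local Open Scope ring_scope.

Section H.
Variable F : finFieldType.
Notation V := 'rV[F]_3.

Lemma hdist_scale (l : F) (a b : V) : l != 0 -> hdist (l *: a) (l *: b) = hdist a b.
Proof.
move=> lnz; rewrite /hdist; apply: eq_card => i; rewrite !inE !mxE.
by apply/negbLR; rewrite negbK (inj_eq (mulfI lnz)).
Qed.

Lemma Dq_scale (l : F) (a : V) : l != 0 -> (l *: a \in Dq F) = (a \in Dq F).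
Proof.
move=> lnz; rewrite !inE !mxE !mulf_eq0 (negbTE lnz) /=.
by rewrite !(inj_eq (mulfI lnz)).
Qed.

Lemma ball1_scale (l : F) (a x : V) : l != 0 -> (l *: x \in ball1 (l *: a)) = (x \in ball1 a).
Proof. by move=> lnz; rewrite /ball1 !inE hdist_scale. Qed.

Lemma Bt_scale (l : F) (a x : V) : l != 0 -> (l *: x \in Bt (l *: a)) = (x \in Bt a).
Proof.
by move=> lnz; rewrite /Bt !in_setI Dq_scale // /ball1 !inE hdist_scale.
Qed.

Lemma card_bigcup_disj (T I : finType) (P : pred I) (G : I -> {set T}) :
  (forall i j, P i -> P j -> i != j -> [disjoint G i & G j]) ->
  #|\bigcup_(i | P i) G i| = (\sum_(i | P i) #|G i|)%N.
Proof.
move=> dis.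
have cE (A : {set T}) : #|A| = (\sum_x (x \in A : nat))%N.
  by rewrite -sum1_card big_mkcond /=; apply: eq_bigr => x _; case: (x \in A).
rewrite cE (eq_bigr (fun x => \sum_(i | P i) (x \in G i : nat))%N).
  rewrite exchange_big /=; apply: eq_bigr => i _; by rewrite cE.
move=> x _; case: (boolP (x \in \bigcup_(i | P i) G i)) => [/bigcupP [j Pj xj]|nx].
  rewrite (bigD1 j) //= xj big1 // => k /andP [Pk kj].
  have := dis k j Pk Pj kj; rewrite disjoint_sym => /disjointFr ->//.
rewrite big1 // => i Pi; apply/eqP; rewrite eqb0; apply: contra nx => xi.
by apply/bigcupP; exists i.
Qed.

Lemma bigcupIl (T I : finType) (P : pred I) (G : I -> {set T}) B :
  (\bigcup_(i | P i) G i) :&: B = \bigcup_(i | P i) (G i :&: B).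
Proof.
apply/setP => x; rewrite inE; apply/andP/bigcupP.
  by move=> [/bigcupP [i Pi xi] xB]; exists i => //; rewrite inE xi.
by move=> [i Pi]; rewrite inE => /andP [xi xB]; split => //; apply/bigcupP; exists i.
Qed.

Lemma bigcupIr (T I : finType) (P : pred I) (G : I -> {set T}) B :
  B :&: (\bigcup_(i | P i) G i) = \bigcup_(i | P i) (B :&: G i).
Proof.
by rewrite setIC bigcupIl; apply: eq_bigr => i _; rewrite setIC.
Qed.

End H.

Theorem lemma8 (F : finFieldType) (u v : 'rV[F]_3) (mu : F) :
  (forall l : F, l != 0 ->
     Bt (l *: u) :&: Bt (mu *: v) = sscale l (Bt u :&: Bt ((l^-1 * mu) *: v)))
  /\
  (Bt_partition u -> Bt_partition v ->
     #|Et u :&: Et v| =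
       ((#|F| - 1) * \sum_(m : F | m != 0%R) #|Bt u :&: Bt (m *: v)|)%N).
Proof.
have P1 : forall (m l : F), l != 0 ->
     Bt (l *: u) :&: Bt (m *: v) = sscale l (Bt u :&: Bt ((l^-1 * m) *: v)).
  move=> m l lnz; apply/setP => x.
  have -> : x = l *: (l^-1 *: x) by rewrite scalerA mulfV // scale1r.
  rewrite /sscale mem_imset; last exact: scalerI.
  have -> : m *: v = l *: ((l^-1 * m) *: v) by rewrite scalerA mulrA mulfV // mul1r.
  by rewrite !in_setI !ball1_scale // !Dq_scale // invr_eq0.
split; first exact: P1.
move=> [du Eu] [dv Ev].
rewrite -Eu -Ev bigcupIl card_bigcup_disj; last first.
  move=> i j inz jnz ij; exact: (disjointW (subsetIl _ _) (subsetIl _ _) (du i j inz jnz ij)).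
rewrite (eq_bigr (fun _ => \sum_(m : F | m != 0%R) #|Bt u :&: Bt (m *: v)|)%N).
  rewrite sum_nat_const; congr (_ * _)%N.
  by rewrite subn1 -(cardC1 (0:F)); apply: eq_card => x; rewrite !inE.
move=> l lnz; rewrite bigcupIr card_bigcup_disj; last first.
  move=> i j inz jnz ij; exact: (disjointW (subsetIr _ _) (subsetIr _ _) (dv i j inz jnz ij)).
rewrite (eq_bigr (fun m => #|Bt u :&: Bt ((l^-1 * m) *: v)|)); last first.
  move=> m _; rewrite P1 // /sscale card_imset //; exact: scalerI.
rewrite (reindex_inj (mulfI lnz)) /=.
under eq_bigr => m _ do rewrite mulrA mulVf // mul1r.
by apply: eq_bigl => m; rewrite mulf_eq0 (negbTE lnz).
Qed.
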